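(* Fix $L>0$. Let $\mathcal{P}_+=\bigsqcup_{N\ge1}\mathcal{P}_{+,N}$, where $\mathcal{P}_{+,N}$ is the set of $x=(x_1,\dots,x_{2N})\in(\mathbb{R}_{>0})^{2N}$ with $\sum_{i=1}^{2N}x_i\le L$ satisfying the highest weight condition. Let $\mathcal{R}$ be the set of all data $\big(s;(\mu^{(i)},\nu^{(i)})_{1\le i\le s};(J^{(i)})_{1\le i\le s}\big)$ where $s\ge1$ is an integer, $\mu^{(i)}>0$ are reals, $\nu^{(i)}\ge1$ are integers such that, with $N^{(i)}=\sum_{j=i}^{s}\nu^{(j)}$, one has $\sum_{i=1}^s N^{(i)}\mu^{(i)}\le L/2$, and each $J^{(i)}=(J^{(i)}_1,\dots,J^{(i)}_{\nu^{(i)}})$ is a real tuple with $0\le J^{(i)}_1\le\cdots\le J^{(i)}_{\nu^{(i)}}\le q_i$, where $\lambda^{(i)}=\sum_{l=1}^i\mu^{(l)}$ and $q_i=L-2\sum_{k=1}^{s}\min(\lambda^{(i)},\lambda^{(k)})\nu^{(k)}$. Define $\phi:\mathcal{P}_+\to\mathcal{R}$ by running Algorithm II on $x$ and setting $s=u$, taking the pairs $(\mu^{(i)},\nu^{(i)})$ it produces, and taking $J^{(i)}$ to be the tuple $$\underbrace{r^{(i)}_1,\dots,r^{(i)}_1}_{\lceil n^{(i)}_1/2\rceil},\ \underbrace{r^{(i)}_2,\dots,r^{(i)}_2}_{\lceil n^{(i)}_2/2\rceil},\ \dots,\ \underbrace{r^{(i)}_{k^{(i)}},\dots,r^{(i)}_{k^{(i)}}}_{\lceil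 n^{(i)}_{k^{(i)}}/2\rceil}.$$ Then $\phi$ is well defined (takes values in $\mathcal{R}$) and is a bijection $\mathcal{P}_+\to\mathcal{R}$.
   Context: Highest weight condition: a sequence $x_1,\dots,x_{2n}$ of nonnegative reals satisfies it if $\sum_{i=1}^k(x_{2i-1}-x_{2i})\ge0$ for all $1\le k\le n$. Algorithm II. Set $N^{(1)}=N$, $x^{(1)}=x$. Given $x^{(i)}=(x^{(i)}_1,\dots,x^{(i)}_{2N^{(i)}})$ of positive reals satisfying the highest weight condition: let $\mu^{(i)}=\min_j x^{(i)}_j$ and $y^{(i)}_j=x^{(i)}_j-\mu^{(i)}$. In the (linear, non-cyclic) array $y^{(i)}_1,\dots,y^{(i)}_{2N^{(i)}}$ consider the maximal runs of consecutive zeros (a lone zero counts as a run); say there are $k^{(i)}$ runs, numbered $1,\dots,k^{(i)}$ from left to right, with lengths $n^{(i)}_1,\dots,n^{(i)}_{k^{(i)}}$. Let $I^{(i)}_j$ be the position of the first entry of the $j$th run and $r^{(i)}_j=\sum_{l=1}^{I^{(i)}_j-1}y^{(i)}_l$. Let $N^{(i+1)}=N^{(i)}-\sum_{j}\lceil n^{(i)}_j/2\rceil$ and $\nu^{(i)}=N^{(i)}-N^{(i+1)}$. If $N^{(i+1)}=0$, stop and set $u=i$. Otherwise form $x^{(i+1)}$ from $y^{(i)}$: (a) if a run of zeros is at the left end, delete it; (b) for every run of zeros lying between positive entries $a,b$, delete the zeros if the run length is even, and if odd delete the zeros and also replace $a,b$ by the single entry $a+b$; (c') if a run of zeros is at the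 right end, preceded by a positive entry $a$, delete the zeros, and if its length is odd also delete $a$. Repeat with $x^{(i+1)}$. *)

(* Defs.v *)
(* The reals are modelled by an arbitrary real field
   [R : realFieldType] (the algorithm and the statement only use the ordered
   field structure of the reals). *)
From HB Require Import structures.
From mathcomp Require Import all_boot all_order all_algebra.
Set Implicit Arguments. Unset Strict Implicit. Unset Printing Implicit Defensive.
Import Order.TTheory GRing.Theory Num.Theory.
Local Open Scope ring_scope.

Section Defs.
Variable R : realFieldType.

(* ---------- highest weight condition (0-based indices) ----------
   sum_{i=1}^k (x_{2i-1} - x_{2i}) >= 0 for 1 <= k <= n, where size x = 2n. *)
Definition hw (x : seq R) : bool :=
  all (fun k => 0 <= \sum_(i < k) (x`_(i.*2) - x`_(i.*2.+1)))
      (iota 1 (size x)./2).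

Definition inP (L : R) (x : seq R) : bool :=
  [&& ~~ odd (size x), (0 < size x)%N,
      all (fun a => 0 < a) x,
      \sum_(a <- x) a <= L & hw x].

Definition minseq (x : seq R) : R := foldr Num.min (head 0 x) x.

(* 0-based start positions of the maximal runs of zeros of y *)
Definition run_starts (y : seq R) : seq nat :=
  [seq i <- iota 0 (size y) | (y`_i == 0) && ((i == 0%N) || (y`_(i.-1) != 0))].
Definition run_len (y : seq R) (i : nat) : nat := find (fun a => a != 0) (drop i y).
Definition run_r (y : seq R) (i : nat) : R := \sum_(l < i) y`_l.

Definition nu_of (y : seq R) : nat := \sum_(i <- run_starts y) uphalf (run_len y i).
Definition J_of (y : seq R) : seq R :=
  flatten [seq nseq (uphalf (run_len y i)) (run_r y i) | i <- run_starts y].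

(* Rules (b) and (c'), processed left to right: [cur] is the current
   (possibly already merged) positive entry, [m] the number of zeros seen
   since it. *)
Fixpoint next_aux (cur : R) (m : nat) (s : seq R) : seq R :=
  match s with
  | [::] => if odd m then [::] else [:: cur]
  | a :: s' =>
      if a == 0 then next_aux cur m.+1 s'
      else if odd m then next_aux (cur + a) 0 s'
      else cur :: next_aux a 0 s'
  end.
(* Rule (a): delete a leading run of zeros, then apply (b), (c'). *)
Definition next_seq (y : seq R) : seq R :=
  match drop (find (fun a => a != 0) y) y with
  | [::] => [::]
  | a :: s => next_aux a 0 s
  end.

(* Output data: a list of triples (mu^(i), nu^(i), J^(i)), i = 1..s. *)
Definition data := seq (R * nat * seq R).

(* Returns None if the algorithm is not
   well defined along the way (current x not of length 2N^(i), not positive,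
   not highest weight, N^(i+1) < 0) or does not stop within the fuel. *)
Fixpoint algo (fuel : nat) (N : nat) (x : seq R) : option data :=
  match fuel with
  | 0 => None
  | fuel'.+1 =>
    if ~~ [&& size x == N.*2 :> nat, all (fun a => 0 < a) x & hw x] then None else
    let mu := minseq x in
    let y := [seq a - mu | a <- x] in
    let nu := nu_of y in
    if (N < nu)%N then None else
    let here := (mu, nu, J_of y) in
    if (N - nu)%N == 0%N then Some [:: here] else
    match algo fuel' (N - nu) (next_seq y) with
    | Some d => Some (here :: d)
    | None => None
    end
  end.

Definition phi (x : seq R) : option data := algo (size x) (size x)./2 x.

Definition mus (d : data) : seq R := [seq p.1.1 | p <- d].
Definition nus (d : data) : seq nat := [seq p.1.2 | p <- d].
Definition Js (d : data) : seq (seq R) := [seq p.2 | p <- d].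

(* N^(i) = sum_{j >= i} nu^(j)   (0-based i) *)
Definition Nsup (d : data) (i : nat) : nat := (\sum_(i <= j < size d) nth 0 (nus d) j)%N.
Definition lam (d : data) (i : nat) : R := \sum_(l < i.+1) (mus d)`_l.
Definition qbd (L : R) (d : data) (i : nat) : R :=
  L - 2 * \sum_(k < size d) Num.min (lam d i) (lam d k) * (nth 0%N (nus d) k)%:R.

Definition inRdata (L : R) (d : data) : Prop :=
  [/\ (0 < size d)%N,
      forall i, (i < size d)%N -> 0 < (mus d)`_i,
      forall i, (i < size d)%N -> (0 < nth 0 (nus d) i)%N,
      \sum_(i < size d) (Nsup d i)%:R * (mus d)`_i <= L / 2 &
      forall i, (i < size d)%N ->
        let J := nth [::] (Js d) i in
        [/\ size J = nth 0%N (nus d) i, sorted <=%R J & all (fun t => 0 <= t <= qbd L d i) J]].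

End Defs.

(* Main.v *)
Require Import Defs.
From HB Require Import structures.
From mathcomp Require Import all_boot all_order all_algebra.
From mathcomp Require Import ring lra.
Import Order.TTheory GRing.Theory Num.Theory.
Local Open Scope ring_scope.
Set Implicit Arguments. Unset Strict Implicit. Unset Printing Implicit Defensive.


Fixpoint Hf {R : realFieldType} (s : R) (J x : seq R) : seq R :=
  match J with
  | [::] => x
  | v :: J' =>
    let fix Hx (s : R) (x : seq R) :=
      match x with
      | [::] => if v == s then 0 :: 0 :: Hf s J' [::] else (v - s) :: 0 :: Hf v J' [::]
      | c :: x' => if v == s then 0 :: 0 :: Hf s J' x
                   else if v < s + c then (v - s) :: 0 :: Hf v J' ((s + c - v) :: x')
                   else c :: Hx (s + c) x'
      end in Hx s x
  end.

Lemma Hf_nil {R : realFieldType} (s : R) x : Hf s [::] x = x.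
Proof. by []. Qed.
Lemma Hf_eq {R : realFieldType} (s : R) J x : Hf s (s :: J) x = 0 :: 0 :: Hf s J x.
Proof. by case: x => [|c x] /=; rewrite eqxx. Qed.
Lemma Hf_split {R : realFieldType} (s v c : R) J x : v != s -> v < s + c ->
  Hf s (v :: J) (c :: x) = (v - s) :: 0 :: Hf v J ((s + c - v) :: x).
Proof. by move=> /negbTE H1 H2 /=; rewrite H1 H2. Qed.
Lemma Hf_pass {R : realFieldType} (s v c : R) J x : v != s -> ~~ (v < s + c) ->
  Hf s (v :: J) (c :: x) = c :: Hf (s + c) (v :: J) x.
Proof. by move=> /negbTE H1 /negbTE H2 /=; rewrite H1 H2. Qed.
Lemma Hf_end {R : realFieldType} (s v : R) J : v != s ->
  Hf s (v :: J) [::] = (v - s) :: 0 :: Hf v J [::].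
Proof. by move=> /negbTE H1 /=; rewrite H1. Qed.

Lemma Hf_ind {R : realFieldType} (P : R -> seq R -> seq R -> Prop) :
  (forall s x, P s [::] x) ->
  (forall s J x, P s J x -> P s (s :: J) x) ->
  (forall s v J c x, v != s -> v < s + c -> P v J ((s + c - v) :: x) -> P s (v :: J) (c :: x)) ->
  (forall s v J c x, v != s -> ~~ (v < s + c) -> P (s + c) (v :: J) x -> P s (v :: J) (c :: x)) ->
  (forall s v J, v != s -> P v J [::] -> P s (v :: J) [::]) ->
  forall s J x, P s J x.
Proof.
move=> H0 H1 H2 H3 H4 s J; elim: J s => [|v J IH] s x; first exact: H0.
elim: x s => [|c x IHx] s.
  by case: (eqVneq v s) => [->|ne]; [apply: H1; apply: IH | apply: H4 => //; apply: IH].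
case: (eqVneq v s) => [->|ne]; first by apply: H1; apply: IH.
case lt: (v < s + c); first by apply: H2 => //; apply: IH.
by apply: H3 => //; rewrite lt.
Qed.

Definition lz {R : realFieldType} (y : seq R) : nat := find (fun a => a != 0) y.

Definition addhead {R : realFieldType} (d : R) (s : seq R) :=
  if s is a :: s' then (a + d) :: s' else [::].

Lemma next_aux_lz {R : realFieldType} (cur : R) m y :
  next_aux cur m y = next_aux cur (m + lz y) (drop (lz y) y).
Proof.
elim: y m => [|a y IH] m /=; first by rewrite addn0.
rewrite /lz /=; case: (eqVneq a 0) => [->|na] /=.
  by rewrite IH addSnnS.
by rewrite addn0 (negbTE na).
Qed.

Lemma next_aux_add {R : realFieldType} (cur d : R) m y :
  next_aux (cur + d) m y = addhead d (next_aux cur m y).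
Proof.
elim: y cur m => [|a y IH] cur m /=; first by case: (odd m).
case: (a == 0); first exact: IH.
case: (odd m) => //.
by rewrite -addrA (addrC d) addrA IH.
Qed.

Lemma next_seq_def {R : realFieldType} (y : seq R) :
  next_seq y = if drop (lz y) y is a :: s then next_aux a 0 s else [::].
Proof. by []. Qed.

Lemma drop_lz_head {R : realFieldType} (y : seq R) a s :
  drop (lz y) y = a :: s -> a != 0.
Proof.
elim: y => [|b y IH] //=; rewrite /lz /=.
case: (eqVneq b 0) => [->|nb] /=; first exact: IH.
by move=> -[<- _].
Qed.

Lemma next_seq0 {R : realFieldType} (y : seq R) : next_seq (0 :: y) = next_seq y.
Proof. by rewrite /next_seq /= eqxx. Qed.

Lemma next_seqc {R : realFieldType} (c : R) y : c != 0 -> next_seq (c :: y) = next_aux c 0 y.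
Proof. by move=> nc; rewrite /next_seq /= nc. Qed.

Lemma lz0 {R : realFieldType} (y : seq R) : lz (0 :: y) = (lz y).+1.
Proof. by rewrite /lz /= eqxx. Qed.
Lemma lzc {R : realFieldType} (c : R) y : c != 0 -> lz (c :: y) = 0%N.
Proof. by move=> nc; rewrite /lz /= nc. Qed.


Lemma map_flatten' (S T : Type) (f : S -> T) ss :
  map f (flatten ss) = flatten (map (map f) ss).
Proof. by elim: ss => //= s ss IH; rewrite map_cat IH. Qed.

Lemma rs_cons {R : realFieldType} (a : R) y :
  run_starts (a :: y) = (if a == 0 then [:: 0%N] else [::]) ++
    map S (if a == 0 then filter (fun i => i != 0%N) (run_starts y) else run_starts y).
Proof.
rewrite /run_starts /=.
have -> : iota 1 (size y) = map S (iota 0 (size y)) by rewrite -(iotaDl 1).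
rewrite filter_map.
case: (eqVneq a 0) => [->|na] /=.
  rewrite /= -filter_predI; congr (_ :: map _ _); apply: eq_filter => i /=.
  by rewrite /preim /=; case: i => [|j] /=; rewrite ?eqxx ?andbF ?andbT.
congr (map _ _); apply: eq_filter => i /=.
by rewrite /preim /=; case: i => [|j] /=; rewrite ?na ?andbT.
Qed.

Definition gJ {R : realFieldType} (y : seq R) (i : nat) := nseq (uphalf (run_len y i)) (run_r y i).

Lemma J_ofE {R : realFieldType} (y : seq R) : J_of y = flatten (map (gJ y) (run_starts y)).
Proof. by []. Qed.

Lemma gJ_cons {R : realFieldType} (a : R) y i : gJ (a :: y) i.+1 = map (fun w => a + w) (gJ y i).
Proof.
rewrite /gJ map_nseq; congr nseq.
by rewrite /run_r big_ord_recl.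
Qed.

Lemma J_of_c {R : realFieldType} (a : R) y : a != 0 ->
  J_of (a :: y) = map (fun w => a + w) (J_of y).
Proof.
move=> na; rewrite !J_ofE rs_cons (negbTE na) /= map_flatten' -!map_comp.
by congr flatten; apply: eq_map => i /=; rewrite gJ_cons.
Qed.

Lemma uphalfS n : uphalf n.+1 = (uphalf n + ~~ odd n)%N.
Proof.
by rewrite uphalf_half /= addnC.
Qed.

Lemma J_of_0 {R : realFieldType} (y : seq R) :
  J_of (0 :: y) = (if odd (lz y) then [::] else [:: 0]) ++ J_of y.
Proof.
rewrite !J_ofE rs_cons eqxx /= -map_comp.
have -> : flatten [seq (gJ (0 :: y) \o S) i | i <- [seq i <- run_starts y | i != 0%N]]
   = flatten [seq gJ y i | i <- [seq i <- run_starts y | i != 0%N]].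
  congr flatten; apply: eq_map => i /=; rewrite gJ_cons.
  by rewrite (eq_map (@add0r R)) map_id.
have g0 : gJ (0 :: y) 0 = nseq (uphalf (lz y).+1) 0.
  by rewrite /gJ /run_len /run_r big_ord0 drop0 /= eqxx.
rewrite g0; clear g0.
case: y => [|b y] /=.
  by rewrite /lz /run_starts.
rewrite rs_cons.
have Hf : [seq i <- (if b == 0 then [:: 0%N] else [::]) ++
           [seq i.+1 | i <- if b == 0 then [seq i <- run_starts y | i != 0%N] else run_starts y]
        | i != 0%N] = [seq i.+1 | i <- if b == 0 then [seq i <- run_starts y | i != 0%N] else run_starts y].
  rewrite filter_cat; case: (b == 0) => /=; apply/all_filterP; by apply/allP => i /mapP [j _ ->].
rewrite Hf.
case: (eqVneq b 0) => [->|nb] /=.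
  have -> : gJ (0 :: y) 0 = nseq (uphalf (lz y).+1) 0.
    by rewrite /gJ /run_len /run_r big_ord0 drop0 /lz /= eqxx.
  rewrite uphalfS; case: (odd (lz y)) => /=; by rewrite ?addn0 ?addn1.
by [].
Qed.

Lemma nu_ofE {R : realFieldType} (y : seq R) : nu_of y = size (J_of y).
Proof.
rewrite /nu_of J_ofE size_flatten /shape -map_comp sumnE big_map.
by apply: eq_bigr => i _; rewrite /= /gJ size_nseq.
Qed.


Lemma J_of_pos {R : realFieldType} (x : seq R) : all (fun a => 0 < a) x -> J_of x = [::].
Proof.
elim: x => [|a x IH] /=; first by rewrite /J_of /run_starts.
by move=> /andP [ha hx]; rewrite J_of_c ?IH // gt_eqF.
Qed.

Lemma next_aux_pos {R : realFieldType} (c : R) x : all (fun a => 0 < a) x -> next_aux c 0 x = c :: x.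
Proof.
elim: x c => [|a x IH] c //= /andP [ha hx].
by rewrite gt_eqF //= IH.
Qed.

Lemma next_seq_pos {R : realFieldType} (x : seq R) : all (fun a => 0 < a) x -> next_seq x = x.
Proof.
case: x => [|c x] //= /andP [hc hx].
by rewrite next_seqc ?gt_eqF // next_aux_pos.
Qed.

Lemma lz_pos {R : realFieldType} (x : seq R) : all (fun a => 0 < a) x -> lz x = 0%N.
Proof. by case: x => [|c x] // /andP [hc _]; rewrite lzc // gt_eqF. Qed.

Lemma sorted_tail {R : realFieldType} (v : R) J : sorted <=%R (v :: J) -> sorted <=%R J /\ all (fun w => v <= w) J.
Proof.
move=> h; split; first exact: path_sorted h.
exact: (order_path_min (@le_trans _ R)).
Qed.

Lemma H_fwd {R : realFieldType} (s : R) J x :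
  sorted <=%R J -> all (fun w => s <= w) J -> all (fun a => 0 < a) x ->
  [/\ J_of (Hf s J x) = map (fun w => w - s) J, next_seq (Hf s J x) = x & ~~ odd (lz (Hf s J x))].
Proof.
move: s J x; apply: Hf_ind.
- move=> s x _ _ hx; rewrite Hf_nil J_of_pos // next_seq_pos // lz_pos //.
- move=> s J x IH hs /andP [_ hJ] hx; rewrite Hf_eq.
  have [hs' _] := sorted_tail hs.
  have [IH1 IH2 IH3] := IH hs' hJ hx.
  split.
  + rewrite J_of_0 lz0 /= IH3 /= J_of_0 (negbTE IH3) /= IH1 subrr //.
  + by rewrite !next_seq0.
  + by rewrite !lz0 /= negbK.
- move=> s v J c x nvs lt IH hs /andP [hv hJ] /andP [hc hx].
  have [hs' hJv] := sorted_tail hs.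
  have hc' : 0 < s + c - v by rewrite subr_gt0.
  case: (IH hs' hJv) => [|IH1 IH2 IH3]; first by rewrite /= hc'.
  have nvs' : v - s != 0 by rewrite subr_eq0.
  rewrite Hf_split //; split.
  + rewrite J_of_c // J_of_0 (negbTE IH3) /= IH1 addr0; congr (_ :: _).
    by rewrite -map_comp; apply: eq_map => w /=; ring.
  + rewrite next_seqc //= eqxx next_aux_lz.
    move: IH2; rewrite next_seq_def.
    case E: (drop (lz (Hf v J (s + c - v :: x))) _) => [|a r] // IH2.
    have na := drop_lz_head E.
    rewrite /= (negbTE na) add0n IH3 addrC next_aux_add IH2 /=.
    by congr (_ :: _); ring.
  + by rewrite lzc.
- move=> s v J c x nvs nlt IH hs /andP [hv hJ] /andP [hc hx].
  have [hs' hJv] := sorted_tail hs.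
  have hsc : s + c <= v by rewrite leNgt.
  have hJ' : all (fun w => s + c <= w) (v :: J).
    rewrite /= hsc /=; apply/allP => w /(allP hJv); exact: le_trans.
  have [IH1 IH2 IH3] := IH hs hJ' hx.
  have nc : c != 0 by rewrite gt_eqF.
  rewrite Hf_pass //; split.
  + by rewrite J_of_c // IH1 -map_comp; apply: eq_map => w /=; ring.
  + rewrite next_seqc // next_aux_lz.
    move: IH2; rewrite next_seq_def.
    case E: (drop (lz (Hf (s + c) (v :: J) x)) _) => [|a r] IH2.
      by rewrite /= (negbTE IH3) IH2.
    have na := drop_lz_head E.
    by rewrite /= (negbTE na) add0n (negbTE IH3) IH2.
  + by rewrite lzc.
- move=> s v J nvs IH hs /andP [hv hJ] _.
  have [hs' hJv] := sorted_tail hs.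
  have [IH1 IH2 IH3] := IH hs' hJv isT.
  have nvs' : v - s != 0 by rewrite subr_eq0.
  rewrite Hf_end //; split.
  + rewrite J_of_c // J_of_0 (negbTE IH3) /= IH1 addr0; congr (_ :: _).
    by rewrite -map_comp; apply: eq_map => w /=; ring.
  + rewrite next_seqc //= eqxx next_aux_lz.
    move: IH2; rewrite next_seq_def.
    case E: (drop (lz (Hf v J [::])) _) => [|a r] IH2.
      by rewrite /= add0n IH3.
    have na := drop_lz_head E.
    by rewrite /= (negbTE na) add0n IH3 addrC next_aux_add IH2.
  + by rewrite lzc.
Qed.


Lemma H_size {R : realFieldType} (s : R) J x : size (Hf s J x) = (size x + (size J).*2)%N.
Proof.
move: s J x; apply: Hf_ind.
- by move=> s x; rewrite Hf_nil addn0.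
- by move=> s J x IH; rewrite Hf_eq /= IH doubleS addnS addnS.
- by move=> s v J c x nvs lt IH; rewrite Hf_split //= IH /= doubleS !addnS !addSn.
- by move=> s v J c x nvs nlt IH; rewrite Hf_pass //= IH /= addSn.
- by move=> s v J nvs IH; rewrite Hf_end //= IH /= doubleS.
Qed.

Lemma H_zero {R : realFieldType} (s : R) J x : J != [::] -> 0 \in Hf s J x.
Proof.
move: s J x; apply: Hf_ind => //.
- by move=> s J x _ _; rewrite Hf_eq mem_head.
- by move=> s v J c x nvs lt _ _; rewrite Hf_split // in_cons mem_head orbT.
- by move=> s v J c x nvs nlt IH h; rewrite Hf_pass // in_cons IH ?orbT.
- by move=> s v J nvs _ _; rewrite Hf_end // in_cons mem_head orbT.
Qed.

Lemma H_nonneg {R : realFieldType} (s : R) J x :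
  sorted <=%R J -> all (fun w => s <= w) J -> all (fun a => 0 < a) x ->
  all (fun a => 0 <= a) (Hf s J x).
Proof.
move: s J x; apply: Hf_ind.
- move=> s x _ _ hx; rewrite Hf_nil; apply/allP => a /(allP hx); exact: ltW.
- move=> s J x IH hs /andP [_ hJ] hx; rewrite Hf_eq /= lexx /=.
  have [hs' _] := sorted_tail hs; exact: IH.
- move=> s v J c x nvs lt IH hs /andP [hv hJ] /andP [hc hx].
  have [hs' hJv] := sorted_tail hs.
  have hc' : 0 < s + c - v by rewrite subr_gt0.
  rewrite Hf_split //= subr_ge0 hv lexx /=; apply: IH => //=; by rewrite hc'.
- move=> s v J c x nvs nlt IH hs /andP [hv hJ] /andP [hc hx].
  have [hs' hJv] := sorted_tail hs.
  have hsc : s + c <= v by rewrite leNgt.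
  rewrite Hf_pass //= (ltW hc) /=; apply: IH => //=.
  rewrite hsc /=; apply/allP => w /(allP hJv); exact: le_trans.
- move=> s v J nvs IH hs /andP [hv hJ] _.
  have [hs' hJv] := sorted_tail hs.
  by rewrite Hf_end //= subr_ge0 hv lexx /=; apply: IH.
Qed.

Lemma sum_pos_ge {R : realFieldType} (x : seq R) : all (fun a => 0 < a) x -> 0 <= \sum_(a <- x) a.
Proof.
move=> hx; rewrite big_seq; apply: sumr_ge0 => a ha; exact: ltW (allP hx a ha).
Qed.

Lemma H_sum {R : realFieldType} (B s : R) J x :
  sorted <=%R J -> all (fun w => s <= w) J -> all (fun a => 0 < a) x ->
  (s + \sum_(a <- Hf s J x) a <= B) = (s + \sum_(a <- x) a <= B) && all (fun w => w <= B) J.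
Proof.
move: s J x; apply: Hf_ind.
- by move=> s x _ _ _; rewrite Hf_nil andbT.
- move=> s J x IH hs /andP [_ hJ] hx; rewrite Hf_eq !big_cons !add0r.
  have [hs' _] := sorted_tail hs; rewrite IH //=.
  case h: (s + \sum_(a <- x) a <= B) => //=.
  have -> : s <= B by apply: le_trans h; rewrite lerDl sum_pos_ge.
  by [].
- move=> s v J c x nvs lt IH hs /andP [hv hJ] /andP [hc hx].
  have [hs' hJv] := sorted_tail hs.
  have hc' : 0 < s + c - v by rewrite subr_gt0.
  rewrite Hf_split // !big_cons.
  set Y := Hf v J _.
  have -> : s + (v - s + (0 + \sum_(a <- Y) a)) = v + \sum_(a <- Y) a by ring.
  rewrite IH //=; last by rewrite hc'.
  rewrite big_cons.
  have -> : v + (s + c - v + \sum_(a <- x) a) = s + (c + \sum_(a <- x) a) by ring.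
  case h: (s + (c + \sum_(a <- x) a) <= B) => //=.
  have -> : v <= B.
    apply: le_trans h; apply: le_trans (ltW lt) _; rewrite addrA lerDl sum_pos_ge //.
  by [].
- move=> s v J c x nvs nlt IH hs /andP [hv hJ] /andP [hc hx].
  have [hs' hJv] := sorted_tail hs.
  have hsc : s + c <= v by rewrite leNgt.
  have hJ' : all (fun w => s + c <= w) (v :: J).
    rewrite /= hsc /=; apply/allP => w /(allP hJv); exact: le_trans.
  rewrite Hf_pass // !big_cons !addrA IH //.
- move=> s v J nvs IH hs /andP [hv hJ] _.
  have [hs' hJv] := sorted_tail hs.
  rewrite Hf_end // !big_cons.
  set Y := Hf v J _.
  have -> : s + (v - s + (0 + \sum_(a <- Y) a)) = v + \sum_(a <- Y) a by ring.
  rewrite IH // !big_nil !addr0 /=.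
  case h: (v <= B) => //=; first by rewrite (le_trans hv h).
  by rewrite andbF.
Qed.

Fixpoint Aalt {R : realFieldType} (t : R) (b : bool) (x : seq R) : bool :=
  if x is a :: x' then
    (0 <= t + (if b then a else - a)) && Aalt (t + (if b then a else - a)) (~~ b) x'
  else true.

Lemma H_Aalt {R : realFieldType} (s : R) J x :
  sorted <=%R J -> all (fun w => s <= w) J -> all (fun a => 0 < a) x ->
  forall t b, 0 <= t -> b = ~~ odd (size x) -> Aalt t b (Hf s J x) = Aalt t b x.
Proof.
move: s J x; apply: Hf_ind.
- by move=> s x _ _ _ t b _ _; rewrite Hf_nil.
- move=> s J x IH hs /andP [_ hJ] hx t b ht hb; rewrite Hf_eq /=.
  have [hs' _] := sorted_tail hs.
  have -> : t + (if b then 0 else - 0) = t by case: b {hb}; rewrite ?oppr0 addr0.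
  have -> : t + (if ~~ b then 0 else - 0) = t by case: b {hb}; rewrite ?oppr0 addr0.
  by rewrite ht negbK IH.
- move=> s v J c x nvs lt IH hs /andP [hv hJ] /andP [hc hx] t b ht hb.
  have [hs' hJv] := sorted_tail hs.
  have hc' : 0 < s + c - v by rewrite subr_gt0.
  rewrite Hf_split //=.
  set t1 := t + (if b then v - s else - (v - s)).
  have -> : t1 + (if ~~ b then 0 else - 0) = t1 by rewrite oppr0 if_same addr0.
  rewrite negbK.
  case h1: (0 <= t1) => /=.
    rewrite IH //=; last by rewrite hc'.
    have -> : t1 + (if b then s + c - v else - (s + c - v)) = t + (if b then c else - c).
      by rewrite /t1; case: (b); ring.
    by [].
  have -> : (0 <= t + (if b then c else - c)) = false.
    apply: negbTE; move: h1; rewrite /t1; case: (b) => /=.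
      by rewrite addr_ge0 // subr_ge0.
    move=> h1; apply: contraFN h1 => h2; apply: le_trans h2 _.
    by rewrite lerD2l lerN2 lerBlDl ltW.
  by [].
- move=> s v J c x nvs nlt IH hs /andP [hv hJ] /andP [hc hx] t b ht hb.
  have [hs' hJv] := sorted_tail hs.
  have hsc : s + c <= v by rewrite leNgt.
  have hJ' : all (fun w => s + c <= w) (v :: J).
    rewrite /= hsc /=; apply/allP => w /(allP hJv); exact: le_trans.
  rewrite Hf_pass //=.
  case h1: (0 <= t + (if b then c else - c)) => //=.
  by rewrite IH // hb /= negbK.
- move=> s v J nvs IH hs /andP [hv hJ] _ t b ht hb.
  have [hs' hJv] := sorted_tail hs.
  rewrite Hf_end //= hb /=.
  have h1 : 0 <= t + (v - s) by rewrite addr_ge0 // subr_ge0.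
  by rewrite h1 oppr0 addr0 h1 /= IH.
Qed.

Lemma H_exists {R : realFieldType} (y : seq R) (s : R) :
  all (fun a => 0 <= a) y -> ~~ odd (lz y) ->
  exists J x, [/\ sorted <=%R J, all (fun w => s <= w) J, all (fun a => 0 < a) x & y = Hf s J x].
Proof.
move: {2}(size y) (leqnn (size y)) => n; elim: n y s => [|n IHn] y s.
  by case: y => // _ _ _; exists [::], [::].
case: y => [|a y] hsz hy hlz; first by exists [::], [::].
move: hy => /andP [ha hy].
case: (eqVneq a 0) => [a0|na].
  subst a; case: y hsz hy hlz => [|b y] hsz hy; first by rewrite lz0.
  move: hy => /andP [hb hy].
  case: (eqVneq b 0) => [b0|nb]; last by rewrite lz0 lzc.
  subst b; rewrite !lz0 /= negbK => hlz.
  have [J [x [h1 h2 h3 ->]]] := IHn y s (ltnW hsz) hy hlz.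
  exists (s :: J), x; split => //.
  - by rewrite /= path_sortedE //; [rewrite h2 | exact: le_trans].
  - by rewrite /= lexx.
  - by rewrite Hf_eq.
have apos : 0 < a by rewrite lt_def na.
case hlz': (odd (lz y)).
  case: y hsz hy hlz hlz' => [|b y] hsz hy hlz; first by [].
  move: hy => /andP [hb hy].
  case: (eqVneq b 0) => [b0|nb]; last by rewrite lzc.
  subst b; rewrite lz0 /= => hlz3.
  have [J [x [h1 h2 h3 ->]]] := IHn y (s + a) (ltnW hsz) hy hlz3.
  exists ((s + a) :: J).
  case: x h3 => [|d x] h3.
    exists [::]; split => //.
    - by rewrite /= path_sortedE //; [rewrite h2 | exact: le_trans].
    - rewrite /= lerDl (ltW apos) /=; apply/allP => w /(allP h2); apply: le_trans; rewrite lerDl; exact: ltW.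
    - rewrite Hf_end; last by rewrite -subr_eq0 addrC addKr gt_eqF.
      by rewrite addrC addrK.
  move: h3 => /andP [hd hx].
  exists ((a + d) :: x); split => //.
  - by rewrite /= path_sortedE //; [rewrite h2 | exact: le_trans].
  - rewrite /= lerDl (ltW apos) /=; apply/allP => w /(allP h2); apply: le_trans; rewrite lerDl; exact: ltW.
  - by rewrite /= addr_gt0.
  - rewrite Hf_split; last by rewrite addrA ltrDl.
      by rewrite addrC addrK; congr (_ :: _ :: Hf _ _ (_ :: _)); ring.
    by rewrite -subr_eq0 addrC addKr gt_eqF.
have [J [x [h1 h2 h3 ->]]] := IHn y (s + a) hsz hy (negbT hlz').
exists J, (a :: x); split => //.
- apply/allP => w /(allP h2); apply: le_trans; rewrite lerDl; exact: ltW.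
- by rewrite /= apos.
case: J h1 h2 => [|v J] h1 h2 //.
rewrite Hf_pass //.
- move: h2 => /= /andP [hv _]; rewrite gt_eqF //; apply: lt_le_trans hv; by rewrite ltrDl.
- by move: h2 => /= /andP [hv _]; rewrite -leNgt.
Qed.


Lemma seq2_ind (T : Type) (P : seq T -> Prop) :
  P [::] -> (forall a, P [:: a]) -> (forall a b s, P s -> P [:: a, b & s]) -> forall s, P s.
Proof.
move=> H0 H1 H2 s.
suff : P s /\ forall a, P (a :: s) by case.
elim: s => [|b s [IH1 IH2]]; first by split.
by split => // a; apply: H2.
Qed.

Definition hwg {R : realFieldType} (t : R) (x : seq R) : bool :=
  all (fun k => 0 <= t + \sum_(i < k) (x`_(i.*2) - x`_(i.*2.+1))) (iota 1 (size x)./2).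

Lemma hw_hwg {R : realFieldType} (x : seq R) : hw x = hwg 0 x.
Proof. by rewrite /hw /hwg; apply: eq_all => k; rewrite add0r. Qed.

Lemma hwg_cons2 {R : realFieldType} (t a b : R) x :
  hwg t [:: a, b & x] = (0 <= t + (a - b)) && hwg (t + (a - b)) x.
Proof.
rewrite /hwg /=.
have -> : iota 2 (size x)./2 = map S (iota 1 (size x)./2) by rewrite -(iotaDl 1).
rewrite all_map big_ord1 /=; congr andb; apply: eq_all => k /=.
by rewrite big_ord_recl /= addrA.
Qed.

Lemma hwg_nil {R : realFieldType} (t : R) : hwg t [::] = true. Proof. by []. Qed.
Lemma hwg_1 {R : realFieldType} (t a : R) : hwg t [:: a] = true. Proof. by []. Qed.

Lemma hwg_Aalt {R : realFieldType} (x : seq R) (t : R) :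
  all (fun a => 0 <= a) x -> 0 <= t -> hwg t x = Aalt t true x.
Proof.
elim/seq2_ind: x t => [|a|a b x IH] t hx ht //.
  by move: hx => /= /andP [ha _]; rewrite addr_ge0.
move: hx => /= /andP [ha /andP [hb hx]].
rewrite hwg_cons2.
rewrite -addrA; case h: (0 <= t + (a - b)) => /=.
  by rewrite IH // addr_ge0.
by rewrite andbF.
Qed.

Lemma hwg_shift {R : realFieldType} (x : seq R) (t c : R) :
  hwg t (map (fun a => a + c) x) = hwg t x.
Proof.
elim/seq2_ind: x t => [|a|a b x IH] t //.
rewrite /= !hwg_cons2 IH.
by have -> : a + c - (b + c) = a - b by ring.
Qed.

Lemma hwg_lz {R : realFieldType} (y : seq R) :
  all (fun a => 0 <= a) y -> ~~ odd (size y) -> hwg 0 y -> ~~ odd (lz y).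
Proof.
elim/seq2_ind: y => [|a|a b y IH] //.
move=> /andP [ha /andP [hb hy]] hsz.
rewrite hwg_cons2.
case: (eqVneq a 0) => [a0|na]; last by rewrite lzc.
subst a; rewrite lz0.
case: (eqVneq b 0) => [b0|nb].
  subst b; rewrite lz0 /= negbK subrr addr0 lexx /= => h.
  by apply: (IH hy) h; move: hsz => /=; rewrite negbK.
rewrite sub0r add0r oppr_ge0 => /andP [hb' _].
by move: nb; rewrite eq_le hb hb'.
Qed.

Lemma fmin {R : realFieldType} (h : R) s :
  [/\ foldr Num.min h s \in h :: s, foldr Num.min h s <= h & all (fun a => foldr Num.min h s <= a) s].
Proof.
elim: s => [|a s [IH1 IH2 IH3]] /=; first by rewrite mem_head lexx.
rewrite minEle; case: leP => hle.
- split.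
  + by rewrite !in_cons eqxx orbT.
  + exact: le_trans hle IH2.
  + rewrite lexx /=; apply/allP => w /(allP IH3); exact: le_trans.
- split.
  + by move: IH1; rewrite !in_cons => /orP [->|->]; rewrite ?orbT.
  + exact: IH2.
  + by rewrite (ltW hle).
Qed.

Lemma minseq_min {R : realFieldType} (x : seq R) : x != [::] ->
  minseq x \in x /\ all (fun a => minseq x <= a) x.
Proof.
case: x => [|h s] // _.
have [m1 m2 m3] := fmin h (h :: s).
have -> : minseq (h :: s) = foldr Num.min h (h :: s) by [].
split => //.
by move: m1; rewrite in_cons => /orP [/eqP ->|]; rewrite ?mem_head.
Qed.

Lemma minseq_shift {R : realFieldType} (y : seq R) (mu : R) :
  all (fun a => 0 <= a) y -> 0 \in y -> minseq (map (fun a => a + mu) y) = mu.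
Proof.
move=> hy h0.
have ne : map (fun a => a + mu) y != [::] by case: y h0 hy.
have [m1 m2] := minseq_min ne.
have mu_in : mu \in map (fun a => a + mu) y.
  by apply/mapP; exists 0 => //; rewrite add0r.
apply/eqP; rewrite eq_le (allP m2 _ mu_in) /=.
move: m1 => /mapP [z hz ->].
by rewrite lerDr (allP hy z hz).
Qed.

Lemma sum_shift {R : realFieldType} (y : seq R) (c : R) :
  \sum_(a <- map (fun a => a + c) y) a = \sum_(a <- y) a + (size y)%:R * c.
Proof.
elim: y => [|a y IH]; first by rewrite !big_nil mul0r addr0.
by rewrite /= !big_cons IH -addn1 natrD; ring.
Qed.


Lemma Nsup0 {R : realFieldType} (mu : R) nu J (d' : data R) :
  Nsup ((mu, nu, J) :: d') 0 = (nu + Nsup d' 0)%N.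
Proof. by rewrite /Nsup /= big_nat_recl. Qed.

Lemma NsupS {R : realFieldType} (mu : R) nu J (d' : data R) i :
  Nsup ((mu, nu, J) :: d') i.+1 = Nsup d' i.
Proof.
rewrite /Nsup /= -addn1 big_addn subn1 /=.
by apply: eq_bigr => j _; rewrite addn1.
Qed.

Lemma Nsup_sum {R : realFieldType} (d : data R) : Nsup d 0 = (\sum_(k < size d) nth 0%N (nus d) k)%N.
Proof. by rewrite /Nsup big_mkord. Qed.

Lemma lam0 {R : realFieldType} (mu : R) nu J (d' : data R) : lam ((mu, nu, J) :: d') 0 = mu.
Proof. by rewrite /lam big_ord1. Qed.

Lemma lamS {R : realFieldType} (mu : R) nu J (d' : data R) i :
  lam ((mu, nu, J) :: d') i.+1 = mu + lam d' i.
Proof. by rewrite /lam big_ord_recl. Qed.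

Lemma lam_ge0 {R : realFieldType} (d : data R) :
  (forall i, (i < size d)%N -> 0 < (mus d)`_i) -> forall i, 0 <= lam d i.
Proof.
move=> h i; rewrite /lam; apply: sumr_ge0 => l _.
case: (ltnP l (size d)) => hl; first exact: ltW (h _ hl).
by rewrite nth_default // size_map.
Qed.

Lemma minDl {R : realFieldType} (m a b : R) : Num.min (m + a) (m + b) = m + Num.min a b.
Proof. by rewrite !minEle lerD2l; case: ifP. Qed.

Lemma sumcond_cons {R : realFieldType} (mu : R) nu J (d' : data R) :
  \sum_(i < size ((mu, nu, J) :: d')) (Nsup ((mu, nu, J) :: d') i)%:R * (mus ((mu, nu, J) :: d'))`_i
  = (nu + Nsup d' 0)%N%:R * mu + \sum_(i < size d') (Nsup d' i)%:R * (mus d')`_i.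
Proof.
rewrite /= big_ord_recl Nsup0 /=; congr (_ + _).
by apply: eq_bigr => i _; rewrite NsupS.
Qed.

Lemma qbd_cons {R : realFieldType} (L mu : R) nu J (d' : data R) :
  (forall k, 0 <= lam d' k) ->
  qbd L ((mu, nu, J) :: d') 0 = L - 2 * (nu + Nsup d' 0)%N%:R * mu /\
  forall i, qbd L ((mu, nu, J) :: d') i.+1 = qbd (L - 2 * (nu + Nsup d' 0)%N%:R * mu) d' i.
Proof.
move=> hl.
have hs : (\sum_(k < size d') (nth 0%N (nus d') k)%:R : R) = (Nsup d' 0)%:R.
  by rewrite Nsup_sum natr_sum.
split.
  rewrite /qbd /= big_ord_recl lam0 minEle lexx /=.
  have -> : \sum_(i < size d') Num.min mu (lam ((mu, nu, J) :: d') (bump 0 i)) * (nth 0%N (nus ((mu, nu, J) :: d')) (bump 0 i))%:R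
          = \sum_(i < size d') mu * (nth 0%N (nus d') i)%:R.
    apply: eq_bigr => i _; rewrite /bump /= add1n lamS minEle lerDl hl //.
  rewrite -mulr_sumr hs natrD; ring.
move=> i; rewrite /qbd /= big_ord_recl lamS lam0.
have -> : Num.min (mu + lam d' i) mu = mu by rewrite minEle; case: ifP => // h; apply/eqP; rewrite eq_le h lerDl hl.
have -> : \sum_(k < size d') Num.min (mu + lam d' i) (lam ((mu, nu, J) :: d') (bump 0 k)) * (nth 0%N (nus ((mu, nu, J) :: d')) (bump 0 k))%:R
        = \sum_(k < size d') (mu * (nth 0%N (nus d') k)%:R + Num.min (lam d' i) (lam d' k) * (nth 0%N (nus d') k)%:R).
  apply: eq_bigr => k _; rewrite /bump /= add1n lamS minDl; ring.
rewrite big_split /= -mulr_sumr hs natrD; ring.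
Qed.

Lemma inR_cons {R : realFieldType} (L mu : R) nu J (d' : data R) :
  inRdata L ((mu, nu, J) :: d') <->
  [/\ 0 < mu, (0 < nu)%N, size J = nu &
   [/\ sorted <=%R J,
      all (fun t => 0 <= t <= L - 2 * (nu + Nsup d' 0)%N%:R * mu) J &
      (d' = [::] \/ inRdata (L - 2 * (nu + Nsup d' 0)%N%:R * mu) d')]].
Proof.
have A1 : forall P S : R, P + S <= L / 2 -> S <= (L - 2 * P) / 2 by move=> P S h; lra.
have A2 : forall P S : R, S <= (L - 2 * P) / 2 -> P + S <= L / 2 by move=> P S h; lra.
have A3 : forall P : R, 0 <= L - 2 * P -> P + 0 <= L / 2 by move=> P h; lra.
split.
- case => _ hmu hnu hsum hJ.
  have hmu' : forall i, (i < size d')%N -> 0 < (mus d')`_i := fun i hi => hmu i.+1 hi.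
  have hl := lam_ge0 hmu'.
  have [q0 qS] := qbd_cons L mu nu J hl.
  have := hJ 0%N isT; rewrite /= q0 => -[J1 J2 J3].
  split => //; [exact: hmu 0%N isT | exact: hnu 0%N isT |].
  split => //; clear J1 J2 J3.
  case: d' hmu hnu hsum hJ hmu' hl q0 qS => [|p d'] hmu hnu hsum hJ hmu' hl q0 qS; [by left | right].
  split => //.
  + by move=> i hi; apply: (hnu i.+1).
  + by move: hsum; rewrite sumcond_cons -mulrA; apply: A1.
  + by move=> i hi; have := hJ i.+1 hi; rewrite /= qS.
- case => hmu hnu hsz [hso hall hd'].
  have hmu' : forall i, (i < size d')%N -> 0 < (mus d')`_i.
    by case: hd' => [->|[_ h _ _ _]].
  have hl := lam_ge0 hmu'.
  have [q0 qS] := qbd_cons L mu nu J hl.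
  split => //.
  + by case => [|i] //= hi; apply: hmu'.
  + case => [|i] //= hi; case: hd' => [E|[_ _ h _ _]]; [by rewrite E in hi | exact: h].
  + rewrite sumcond_cons; case: hd' => [E|[_ _ _ h _]]; last by apply: A2; rewrite mulrA.
    rewrite E big_ord0; apply: A3; rewrite mulrA.
    clear q0 qS; case: J hsz hall {hso} => [|t J] hsz; first by rewrite -hsz in hnu.
    by move=> /andP [/andP [h1 h2] _]; rewrite -E; exact: le_trans h1 h2.
  + case => [|i] hi; first by rewrite /= q0.
    rewrite /= qS; case: hd' => [E|[_ _ _ _ h]]; [by rewrite E in hi | exact: h].
Qed.


Fixpoint psi {R : realFieldType} (d : data R) : seq R :=
  match d with
  | [::] => [::]
  | (mu, nu, J) :: d' => map (fun a => a + mu) (Hf 0 J (psi d'))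
  end.

Lemma map_shiftK {R : realFieldType} (mu : R) y :
  map (fun a => a - mu) (map (fun a => a + mu) y) = y.
Proof. by rewrite -map_comp (eq_map (fun a => addrK mu a)) map_id. Qed.

Lemma map_shiftK' {R : realFieldType} (mu : R) y :
  map (fun a => a + mu) (map (fun a => a - mu) y) = y.
Proof. by rewrite -map_comp (eq_map (fun a => subrK mu a)) map_id. Qed.

Lemma Nsup_ge {R : realFieldType} (d : data R) L : inRdata L d -> (size d <= Nsup d 0)%N.
Proof.
elim: d L => [|[[mu nu] J] d' IH] L; first by case.
move/inR_cons => [hmu hnu hsz [hso hall hd']].
rewrite Nsup0 /=; case: hd' => [->|h]; first by rewrite /Nsup big_geq // addn0.
by rewrite -add1n leq_add // (IH _ h).
Qed.

Lemma algo_unfold {R : realFieldType} f N (x : seq R) :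
  algo f.+1 N x =
  if ~~ [&& size x == N.*2, all (fun a => 0 < a) x & hw x] then None else
  let mu := minseq x in
  let y := [seq a - mu | a <- x] in
  let nu := nu_of y in
  if (N < nu)%N then None else
  if (N - nu)%N == 0%N then Some [:: (mu, nu, J_of y)] else
  match algo f (N - nu) (next_seq y) with
  | Some d => Some ((mu, nu, J_of y) :: d)
  | None => None
  end.
Proof. by []. Qed.

Lemma hw_Hf_shift {R : realFieldType} (mu : R) J x :
  sorted <=%R J -> all (fun w => 0 <= w) J -> all (fun a => 0 < a) x -> ~~ odd (size x) ->
  hw (map (fun a => a + mu) (Hf 0 J x)) = hw x.
Proof.
move=> hso hJ hx hev.
have hxn : all (fun a => 0 <= a) x by apply/allP => a /(allP hx) /ltW.
by rewrite !hw_hwg hwg_shift hwg_Aalt ?H_nonneg // H_Aalt // ?hwg_Aalt //.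
Qed.

Lemma psi_ok {R : realFieldType} (d : data R) L : inRdata L d ->
  [/\ size (psi d) = (Nsup d 0).*2, all (fun a => 0 < a) (psi d), hw (psi d),
      \sum_(a <- psi d) a <= L &
      forall fuel, (size d <= fuel)%N -> algo fuel (Nsup d 0) (psi d) = Some d].
Proof.
elim: d L => [|[[mu nu] J] d' IH] L; first by case.
move=> hR; have := hR; move/inR_cons => [hmu hnu hsz [hso hall hd']].
set L' := L - 2 * (nu + Nsup d' 0)%N%:R * mu in hall hd'.
have hJ0 : all (fun w => 0 <= w) J by apply/allP => w /(allP hall) /andP [].
have hJL : all (fun w => w <= L') J by apply/allP => w /(allP hall) /andP [].
have hJn : J != [::] by apply/eqP => E; rewrite E /= in hsz; rewrite -hsz in hnu.
have hL'0 : 0 <= L'.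
  move: hJn; case E: J => [|t J2] // _.
  have tin : t \in J by rewrite E mem_head.
  have /andP [h1 h2] := allP hall t tin; exact: le_trans h1 h2.
have [sx' px' hx' sumx' algx'] : [/\ size (psi d') = (Nsup d' 0).*2, all (fun a => 0 < a) (psi d'),
    hw (psi d'), \sum_(a <- psi d') a <= L' &
    d' != [::] -> forall fuel, (size d' <= fuel)%N -> algo fuel (Nsup d' 0) (psi d') = Some d'].
  case: hd' => [E|h]; first by rewrite E /= big_nil /Nsup big_geq.
  by have [? ? ? ? ?] := IH _ h; split.
set x' := psi d' in sx' px' hx' sumx' algx' *.
set y := Hf 0 J x'.
have [Jy ny lzy] := H_fwd hso hJ0 px'.
have Jy' : J_of y = J by rewrite Jy (eq_map (fun a => subr0 a)) map_id.
have sy : size y = (nu + Nsup d' 0).*2 by rewrite /y H_size sx' hsz doubleD addnC.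
have yn := H_nonneg hso hJ0 px'.
have y0 := H_zero 0 x' hJn.
have hev : ~~ odd (size x') by rewrite sx' odd_double.
have psiE : psi ((mu, nu, J) :: d') = map (fun a => a + mu) y by [].
have hpos : all (fun a => 0 < a) (map (fun a => a + mu) y).
  apply/allP => a /mapP [b /(allP yn) hb ->]; exact: ltr_wpDl.
have hhw : hw (map (fun a => a + mu) y) by rewrite hw_Hf_shift.
rewrite psiE; split => //.
- by rewrite size_map sy Nsup0.
- rewrite sum_shift sy.
  have hy : \sum_(a <- y) a <= L'.
    by move: (H_sum L' hso hJ0 px'); rewrite !add0r sumx' hJL /= /y => ->.
  have E : ((nu + Nsup d' 0).*2)%:R * mu = 2 * ((nu + Nsup d' 0)%:R * mu) :> R.
    by rewrite -muln2 natrM; ring.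
  rewrite E; move: hy; rewrite /L' -mulrA; move: ((nu + Nsup d' 0)%:R * mu) => P; lra.
move=> [|f] // hf; rewrite algo_unfold size_map sy Nsup0 eqxx hpos hhw /=.
rewrite minseq_shift // map_shiftK nu_ofE Jy' hsz.
rewrite ltnNge leq_addr /= addKn.
case: hd' => [E|h].
  subst d'; rewrite /Nsup big_geq //.
have s0 : (0 < size d')%N by case: h.
have ne : d' != [::] by rewrite -size_eq0 -lt0n.
have Npos : (0 < Nsup d' 0)%N := leq_trans s0 (Nsup_ge h).
by rewrite (negbTE (lt0n_neq0 Npos)) ny algx'.
Qed.

Lemma phi_ok {R : realFieldType} (N : nat) : forall (L : R) (x : seq R),
  size x = N.*2 -> (0 < N)%N -> all (fun a => 0 < a) x -> hw x -> \sum_(a <- x) a <= L ->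
  exists d, [/\ inRdata L d, psi d = x, Nsup d 0 = N &
                forall fuel, (N <= fuel)%N -> algo fuel N x = Some d].
Proof.
elim/ltn_ind: N => N IH L x hsx hN hpx hhw hsum.
have xne : x != [::] by rewrite -size_eq0 hsx double_eq0 -lt0n.
have [mu_in mu_le] := minseq_min xne.
set mu := minseq x in mu_in mu_le.
have hmu : 0 < mu := allP hpx _ mu_in.
set y := [seq a - mu | a <- x].
have yn : all (fun a => 0 <= a) y by apply/allP => a /mapP [b /(allP mu_le) hb ->]; rewrite subr_ge0.
have y0 : 0 \in y by apply/mapP; exists mu => //; rewrite subrr.
have xE : x = map (fun a => a + mu) y by rewrite map_shiftK'.
have sy : size y = N.*2 by rewrite size_map.
have hwy : hwg 0 y by rewrite /y hwg_shift -hw_hwg.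
have lzy : ~~ odd (lz y) by apply: hwg_lz => //; rewrite sy odd_double.
have [J [x' [hso hJ0 px' yE]]] := H_exists 0 yn lzy.
have [Jy ny _] := H_fwd hso hJ0 px'.
rewrite -yE in Jy ny.
have Jy' : J_of y = J by rewrite Jy (eq_map (fun a => subr0 a)) map_id.
set nu := size J.
have nuy : nu_of y = nu by rewrite nu_ofE Jy'.
have hsz' : (size x' + nu.*2 = N.*2)%N by rewrite -sy yE H_size.
have nuN : (nu <= N)%N by rewrite -leq_double -hsz' leq_addl.
have sx' : size x' = (N - nu).*2 by rewrite doubleB -hsz' addnK.
have hnu : (0 < nu)%N.
  rewrite lt0n /nu size_eq0; apply/negP => /eqP E; move: y0; rewrite yE E Hf_nil.
  by move=> /(allP px'); rewrite ltxx.
have hwx' : hw x'.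
  have px'n : all (fun a => 0 <= a) x' by apply/allP => a /(allP px') /ltW.
  move: hwy; rewrite hw_hwg hwg_Aalt // yE H_Aalt //; last by rewrite sx' odd_double.
  by rewrite hwg_Aalt.
set L' := L - 2 * N%:R * mu.
have hsy : \sum_(a <- y) a <= L'.
  move: hsum; rewrite xE sum_shift sy /L'.
  have E : (N.*2)%:R * mu = 2 * (N%:R * mu) :> R by rewrite -muln2 natrM; ring.
  rewrite E -mulrA; move: (N%:R * mu) => P; lra.
have [hsx' hJL] : \sum_(a <- x') a <= L' /\ all (fun w => w <= L') J.
  move: (H_sum L' hso hJ0 px'); rewrite !add0r -yE hsy => /esym /andP [].
  by [].
have hall : all (fun t => 0 <= t <= L') J.
  by apply/allP => t tJ; rewrite (allP hJ0 t tJ) (allP hJL t tJ).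
have Halgo : forall fuel, (N <= fuel)%N -> forall r,
   ((N - nu)%N == 0%N -> r = [::]) ->
   ((N - nu)%N != 0%N -> algo fuel.-1 (N - nu) x' = Some r) ->
   algo fuel N x = Some ((mu, nu, J) :: r).
  move=> [|f] hf r h1 h2; first by move: hN; rewrite lt0n; case: (N) hf.
  rewrite algo_unfold hsx eqxx hpx hhw /= -/mu -/y nuy Jy' ltnNge nuN /=.
  case: eqP => [E|/eqP E]; first by rewrite h1 // E.
  by rewrite ny h2.
case: (eqVneq (N - nu)%N 0%N) => [E|E].
  have nuE : nu = N by apply/eqP; rewrite eqn_leq nuN /= -subn_eq0 E.
  have x'E : x' = [::] by apply/eqP; rewrite -size_eq0 sx' E.
  exists [:: (mu, nu, J)]; split.
  - apply/inR_cons; split => //; split => //; last by left.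
    by rewrite /Nsup big_geq // addn0 nuE.
  - by rewrite /= xE yE x'E.
  - by rewrite Nsup0 /Nsup big_geq // addn0.
  - by move=> fuel hf; apply: Halgo => // /negP; rewrite E.
have hN' : (0 < N - nu)%N by rewrite lt0n.
have ltN : (N - nu < N)%N by rewrite ltn_subrL hnu hN.
have [d' [hd' pd' Nd' ad']] := IH _ ltN L' x' sx' hN' px' hwx' hsx'.
have NE : (nu + Nsup d' 0)%N = N by rewrite Nd' subnKC.
exists ((mu, nu, J) :: d'); split.
- apply/inR_cons; rewrite NE; split => //; split => //; by right.
- by rewrite /= pd' xE yE.
- by rewrite Nsup0 NE.
- move=> fuel hf; apply: Halgo => //; first by rewrite (negbTE E).
  move=> _; apply: ad'; move: hf; case: (fuel) => [|n] hf /=.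
    by move: hN; rewrite lt0n -leqn0 hf.
  rewrite leq_subLR; apply: leq_trans hf _; by rewrite -add1n leq_add2r.
Qed.


Unset Implicit Arguments. Set Strict Implicit.

Theorem mainTheorem11 (R : realFieldType) (L : R) (hL : 0 < L) :
  (forall x : seq R, inP L x -> exists d, phi x = Some d /\ inRdata L d) /\
  (forall x1 x2 : seq R, inP L x1 -> inP L x2 -> phi x1 = phi x2 -> x1 = x2) /\
  (forall d : data R, inRdata L d -> exists x : seq R, inP L x /\ phi x = Some d).
Proof.
have key : forall x : seq R, inP L x -> exists d, [/\ phi x = Some d, inRdata L d & psi d = x].
  move=> x /and5P [hev hs0 hpos hsum hhw].
  have hsx : size x = ((size x)./2).*2 by rewrite even_halfK.
  have hN : (0 < (size x)./2)%N by rewrite -double_gt0 -hsx.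
  have [d [hd pd _ ad]] := phi_ok hsx hN hpos hhw hsum.
  exists d; split => //; rewrite /phi ad //.
  by rewrite {2}hsx -addnn leq_addr.
split; first by move=> x /key [d [h1 h2 _]]; exists d.
split.
  move=> x1 x2 /key [d1 [h1 _ p1]] /key [d2 [h2 _ p2]]; rewrite h1 h2 => -[E].
  by rewrite -p1 -p2 E.
move=> d hd.
have [sx px hx sumx ax] := psi_ok hd.
have hge := Nsup_ge hd.
have s0 : (0 < size d)%N by case: hd.
exists (psi d); split.
  apply/and5P; split => //; rewrite sx ?odd_double //.
  by rewrite double_gt0; apply: leq_trans hge.
rewrite /phi sx doubleK ax //.
by rewrite -addnn (leq_trans hge) // leq_addr.
Qed.
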